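(* Let $X=(X_k\xrightarrow{v^k}\cdots\xrightarrow{v^1}\langle1\rangle)$ and $Y=(Y_k\xrightarrow{u^k}\cdots\xrightarrow{u^1}\langle1\rangle)$ be $k$-stage level trees with crossings and let $\sigma=(\sigma_i\colon X_i\to Y_i)_{i}$ be an unordered isomorphism from $X$ to $Y$. Then the family $\overline{\sigma}$ (the same bijections $\sigma_i$, regarded as maps $\overline{X}_i\to\overline{Y}_i$) is an isomorphism of $k$-stage level trees $\overline{X}\to\overline{Y}$, i.e. every $\sigma_i\colon\overline{X}_i\to\overline{Y}_i$ is order preserving, if and only if each $\sigma_i$ is order preserving on the fibres of $v^i$, i.e. for all $a,b\in X_i$ with $v^i(a)=v^i(b)$ and $a<b$ in $X_i$ we have $\sigma_i(a)<\sigma_i(b)$ in $Y_i$.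
   Context: Write $\langle\ell\rangle=\{1<\dots<\ell\}$. A $k$-stage level tree with crossings is a diagram $X_k\xrightarrow{v^k}\cdots\xrightarrow{v^2}X_1\xrightarrow{v^1}\langle1\rangle$ of finite totally ordered sets and arbitrary (not necessarily order preserving) functions; it is a $k$-stage level tree if all maps are order preserving. An unordered isomorphism $X\to Y$ of $k$-stage level trees (with crossings) is a family of bijections $\sigma_i\colon X_i\to Y_i$ of underlying sets commuting with the structure maps ($u^i\sigma_i=\sigma_{i-1}v^i$, $\sigma_0=\mathrm{id}$); an isomorphism of $k$-stage level trees is an unordered isomorphism whose components are order preserving. For a $k$-stage level tree with crossings $X$, $\overline{X}$ is the diagram with the same underlying sets and maps and new orders defined inductively: $\overline{X}_1=X_1$, and $\overline{X}_{i+1}$ carries the unique total order making $v^{i+1}\times\mathrm{id}\colon\overline{X}_{i+1}\to\overline{X}_i\times X_{i+1}$ order preserving, where $\overline{X}_i\times X_{i+1}$ has the lexicographic order ($(a,b)\le(a',b')$ iff $a<a'$, or $a=a'$ and $b\le b'$). Then $\overline{X}$ is a $k$-stage level tree. *)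

(* Defs.v *)
From mathcomp Require Import all_boot.
Unset Printing Implicit Defensive.

(* A k-stage level tree with crossings is encoded by sizes n : nat -> nat
   (level i is the totally ordered set 'I_(n i) with its standard order,
   level 0 being <1>, i.e. n 0 = 1) and maps
   v i : 'I_(n i.+1) -> 'I_(n i)  (this is v^{i+1} of the paper).
   Only levels 0..k are relevant. *)

Fixpoint barlt (n : nat -> nat) (v : forall i, 'I_(n i.+1) -> 'I_(n i))
  (i : nat) : rel 'I_(n i) :=
  match i return rel 'I_(n i) with
  | 0 => fun a b => (a < b)%N
  | j.+1 => fun a b =>
      @barlt n v j (v j a) (v j b) || ((v j a == v j b) && (a < b)%N)
  end.
Arguments barlt {n} v i.

(* Main.v *)
Require Import Defs.
From mathcomp Require Import all_boot.

Lemma barlt_irr (n : nat -> nat) (v : forall i, 'I_(n i.+1) -> 'I_(n i)) i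
  (x : 'I_(n i)) : barlt v i x x = false.
Proof.
elim: i x => [|i IH] x /=; first by rewrite ltnn.
by rewrite IH eqxx ltnn.
Qed.

Theorem mainTheorem4 (k : nat)
  (nX nY : nat -> nat) (hX0 : nX 0 = 1) (hY0 : nY 0 = 1)
  (v : forall i, 'I_(nX i.+1) -> 'I_(nX i))
  (u : forall i, 'I_(nY i.+1) -> 'I_(nY i))
  (sigma : forall i, 'I_(nX i) -> 'I_(nY i))
  (sigma_bij : forall i, i <= k -> bijective (sigma i))
  (sigma_comm : forall i, i < k -> forall a : 'I_(nX i.+1),
      u i (sigma i.+1 a) = sigma i (v i a)) :
  (forall i, i <= k -> forall a b : 'I_(nX i),
      barlt v i a b -> barlt u i (sigma i a) (sigma i b))
  <->
  (forall i, i < k -> forall a b : 'I_(nX i.+1),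
      v i a = v i b -> a < b -> sigma i.+1 a < sigma i.+1 b).
Proof.
split.
- move=> H i ik a b eab ab.
  have := H i.+1 ik a b; rewrite /= eab eqxx ab orbT => /(_ isT).
  by rewrite !sigma_comm // eab barlt_irr eqxx.
- move=> H; elim=> [|i IH] ik a b /=.
  + move=> ab; exfalso.
    have hb : nat_of_ord b = 0.
      by have := ltn_ord b; move: (nat_of_ord b) => m; rewrite hX0 ltnS leqn0 => /eqP.
    by move: ab; rewrite hb.
  + case/orP=> [h|/andP[/eqP eab ab]].
    * by rewrite !sigma_comm // IH ?h ?(ltnW ik).
    * by rewrite !sigma_comm // eab eqxx H ?orbT.
Qed.
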